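(* Let $X$ be a Tychonoff space and $G$ a subgroup of $C_u(X)$ (with the subspace topology). Then $G$ is strictly R-bounded if and only if $G$ is countable.
   Context: $C(X)$ is the set of continuous real-valued functions on $X$, a topological group under pointwise addition; $C_u(X)$ is $C(X)$ with the topology of uniform convergence. For a topological group $G$ with identity $e$, the R-game is played as follows: in round $n\in\mathbb N$ player ONE chooses a neighborhood $U_n$ of $e$ and player TWO responds with a point $x_n\in G$; TWO wins if $G=\bigcup_n x_n\cdot U_n$. $G$ is strictly R-bounded if TWO has a winning strategy in this game. *)

(* Defs.v *)
From Stdlib Require Import Reals List.
Open Scope R_scope.

Record TopSpace := {
  carrier :> Type;
  is_open : (carrier -> Prop) -> Prop;
  open_full : is_open (fun _ => True);
  open_inter : forall A B, is_open A -> is_open B -> is_open (fun x => A x /\ B x);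
  open_union : forall (F : (carrier -> Prop) -> Prop),
      (forall A, F A -> is_open A) -> is_open (fun x => exists A, F A /\ A x)
}.

Definition R_open (V : R -> Prop) : Prop :=
  forall y, V y -> exists eps, 0 < eps /\ forall z, Rabs (z - y) < eps -> V z.

Definition continuous_real {X : TopSpace} (f : X -> R) : Prop :=
  forall V, R_open V -> is_open X (fun x => V (f x)).

Definition is_closed {X : TopSpace} (F : X -> Prop) : Prop :=
  is_open X (fun x => ~ F x).

Definition T1_space (X : TopSpace) : Prop :=
  forall a : X, is_closed (fun x => x = a).

Definition completely_regular (X : TopSpace) : Prop :=
  forall (F : X -> Prop) (a : X), is_closed F -> ~ F a ->
    exists f : X -> R, continuous_real f /\
      (forall x, 0 <= f x <= 1) /\ f a = 0 /\ (forall x, F x -> f x = 1).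

Definition Tychonoff (X : TopSpace) : Prop := T1_space X /\ completely_regular X.

Definition subgroup_C {X : TopSpace} (G : (X -> R) -> Prop) : Prop :=
  (forall g, G g -> continuous_real g) /\
  G (fun _ => 0) /\
  (forall f g, G f -> G g -> G (fun x => f x + g x)) /\
  (forall g, G g -> G (fun x => - g x)).

(** Neighborhoods of the identity 0 in G, where G carries the subspace
    topology of C_u(X) (topology of uniform convergence): U ⊆ G contains
    some uniform ball {g ∈ G | ∀x, |g x| <= eps}, eps > 0. *)
Definition nbhd0 {X : TopSpace} (G : (X -> R) -> Prop) (U : (X -> R) -> Prop) : Prop :=
  (forall g, U g -> G g) /\
  exists eps, 0 < eps /\ forall g, G g -> (forall x, Rabs (g x) <= eps) -> U g.

(** The moves of ONE up to round n (inclusive). *)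
Definition prefix {A : Type} (u : nat -> A) (n : nat) : list A := map u (seq 0 (S n)).

(** A strategy of TWO: given ONE's moves U_0,...,U_n, choose x_n. *)
Definition strategy_TWO (X : TopSpace) := list ((X -> R) -> Prop) -> (X -> R).

Definition winning_TWO {X : TopSpace} (G : (X -> R) -> Prop) (s : strategy_TWO X) : Prop :=
  forall U : nat -> ((X -> R) -> Prop),
    (forall n, nbhd0 G (U n)) ->
    (forall n, G (s (prefix U n))) /\
    (forall g, G g <-> exists n u, U n u /\ g = (fun x => s (prefix U n) x + u x)).

Definition strictly_R_bounded {X : TopSpace} (G : (X -> R) -> Prop) : Prop :=
  exists s : strategy_TWO X, winning_TWO G s.

Definition countable_set {A : Type} (G : A -> Prop) : Prop :=
  exists e : nat -> A, forall g, G g -> exists n, e n = g.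

(* Main.v *)
Require Import Defs.
From Stdlib Require Import Reals List.
From Stdlib Require Import Classical ClassicalEpsilon FunctionalExtensionality Lra Lia Cantor.
Import ListNotations.

Fixpoint dec (l : nat) (m : nat) : list nat :=
  match l with
  | O => []
  | S l' => let (a, b) := Cantor.of_nat m in a :: dec l' b
  end.

Definition decode (n : nat) : list nat := let (l, m) := Cantor.of_nat n in dec l m.

Lemma dec_surj (s : list nat) : exists m, dec (length s) m = s.
Proof.
  induction s as [|a s [m Hm]]; simpl.
  - exists 0%nat; reflexivity.
  - exists (Cantor.to_nat (a, m)). rewrite Cantor.cancel_of_to. now rewrite Hm.
Qed.

Lemma decode_surj (s : list nat) : exists n, decode n = s.
Proof.
  destruct (dec_surj s) as [m Hm].
  exists (Cantor.to_nat (length s, m)). unfold decode. rewrite Cantor.cancel_of_to. exact Hm.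
Qed.

Lemma close_eq (a b : R) : (forall k : nat, Rabs (a - b) <= 2 / INR (S k)) -> a = b.
Proof.
  intros H. destruct (Req_dec (a - b) 0) as [E|E]; [lra|].
  assert (P : 0 < Rabs (a - b) / 2) by (generalize (Rabs_pos_lt _ E); lra).
  destruct (archimed_cor1 _ P) as [N [HN HN0]].
  destruct N as [|N]; [lia|].
  specialize (H N).
  assert (2 / INR (S N) = 2 * / INR (S N)) by (unfold Rdiv; ring). lra.
Qed.

Section Main.
Variable X : TopSpace.
Variable G : (X -> R) -> Prop.

Definition B (k : nat) : (X -> R) -> Prop :=
  fun g => G g /\ forall x, Rabs (g x) <= / INR (S k).

Lemma B_nbhd (HG : G (fun _ => 0)) k : nbhd0 G (B k).
Proof.
  split. - intros g [Hg _]; exact Hg.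
  - exists (/ INR (S k)). split.
    + apply Rinv_0_lt_compat, lt_0_INR; lia.
    + intros g Hg Hx; split; auto.
Qed.

Definition Q (s : strategy_TWO X) (sg : list nat) (g : X -> R) : Prop :=
  forall k, exists u, B k u /\ g = (fun x => s (map B (sg ++ [k])) x + u x).

Fixpoint hist (c : list nat -> nat) (n : nat) : list nat :=
  match n with
  | O => []
  | S n' => hist c n' ++ [c (hist c n')]
  end.

Lemma hist_map c n : map (fun i => c (hist c i)) (seq 0 n) = hist c n.
Proof.
  induction n; [reflexivity|].
  rewrite seq_S, map_app, IHn. reflexivity.
Qed.

Lemma exists_sigma (HG : G (fun _ => 0)) s (W : winning_TWO G s) g :
  G g -> exists sg, Q s sg g.
Proof.
  intros Hg. apply NNPP; intro Hn.
  assert (Hc : forall sg, exists k, ~ exists u, B k u /\ g = (fun x => s (map B (sg ++ [k])) x + u x)).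
  { intro sg. apply NNPP; intro H2. apply Hn. exists sg. intro k.
    apply NNPP; intro H3. apply H2. exists k. exact H3. }
  pose (c := fun sg => proj1_sig (constructive_indefinite_description _ (Hc sg))).
  assert (cspec : forall sg, ~ exists u, B (c sg) u /\ g = (fun x => s (map B (sg ++ [c sg])) x + u x)).
  { intro sg. exact (proj2_sig (constructive_indefinite_description _ (Hc sg))). }
  pose (U := fun n => B (c (hist c n))).
  destruct (W U (fun n => B_nbhd HG _)) as [_ Hcov].
  destruct (proj1 (Hcov g) Hg) as [n [u [Hu Hgu]]].
  apply (cspec (hist c n)). exists u. split; [exact Hu|].
  rewrite Hgu. unfold prefix, U.
  rewrite <- (map_map (fun i => c (hist c i)) B), seq_S, map_app, hist_map. reflexivity.
Qed.

End Main.

Theorem theorem2p10 (X : TopSpace) (G : (X -> R) -> Prop) :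
  Tychonoff X -> subgroup_C G ->
  (strictly_R_bounded G <-> countable_set G).
Proof.
  intros _ [Hcont [H0 [Hadd Hneg]]]. split.
  - intros [s W].
    pose (e := fun n => epsilon (inhabits (fun _ : X => 0)) (fun g => G g /\ Q X G s (decode n) g)).
    exists e. intros g Hg.
    destruct (exists_sigma X G H0 s W g Hg) as [sg Hsg].
    destruct (decode_surj sg) as [n Hn]. exists n.
    assert (Hex : exists h, G h /\ Q X G s (decode n) h) by (exists g; rewrite Hn; auto).
    destruct (epsilon_spec (inhabits (fun _ : X => 0)) _ Hex) as [_ Hq].
    fold (e n) in Hq. rewrite Hn in Hq.
    apply functional_extensionality; intro x. apply close_eq. intro k.
    destruct (Hq k) as [u1 [[_ Hu1] E1]]. destruct (Hsg k) as [u2 [[_ Hu2] E2]].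
    assert (A1 : e n x = s (map (B X G) (sg ++ [k])) x + u1 x) by exact (f_equal (fun f => f x) E1).
    assert (A2 : g x = s (map (B X G) (sg ++ [k])) x + u2 x) by exact (f_equal (fun f => f x) E2).
    rewrite A1, A2.
    replace (s (map (B X G) (sg ++ [k])) x + u1 x - (s (map (B X G) (sg ++ [k])) x + u2 x))
      with (u1 x - u2 x) by ring.
    eapply Rle_trans; [apply Rabs_triang|]. rewrite Rabs_Ropp.
    specialize (Hu1 x); specialize (Hu2 x).
    assert (2 / INR (S k) = / INR (S k) + / INR (S k)) by (unfold Rdiv; ring). lra.
  - intros [e He].
    pose (s := fun l : list ((X -> R) -> Prop) =>
                 if excluded_middle_informative (G (e (pred (length l)))) then e (pred (length l))
                 else (fun _ : X => 0)).
    exists s. intros U HU. split.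
    + intro n. unfold s. destruct excluded_middle_informative; auto.
    + intro g. split.
      * intro Hg. destruct (He g Hg) as [n Hn]. exists n, (fun _ => 0). split.
        -- destruct (HU n) as [_ [eps [Heps Hb]]]. apply Hb; auto.
           intro x. rewrite Rabs_R0. lra.
        -- unfold s, prefix. rewrite length_map, length_seq. simpl.
           destruct excluded_middle_informative as [_|C]; [|subst; contradiction].
           subst. apply functional_extensionality; intro x. ring.
      * intros [n [u [Hu Hg]]]. subst g. apply Hadd.
        -- unfold s. destruct excluded_middle_informative; auto.
        -- destruct (HU n) as [HUG _]. auto.
Qed.
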